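(* Let $\mathbb K$ be an infinite field, $\mathcal N$ a vector space over $\mathbb K$, and $f:(\mathbb K^d)_{\mathrm{nc}}\to\mathcal N_{\mathrm{nc}}$ a nc function such that for each $n$, $f(X_1,\dots,X_d)$ is a polynomial function of degree $L_n$ in the $dn^2$ commuting variables $(X_i)_{jk}$ ($i=1,\dots,d$; $j,k=1,\dots,n$) with values in $\mathcal N^{n\times n}$ (with the convention $\deg0=-\infty$). Then there exists a unique sequence of homogeneous nc polynomials $f_j\in\mathcal N\langle x_1,\dots,x_d\rangle$ of degree $j$, $j=0,1,\dots$, such that for all $n\in\mathbb N$: $f_j$ vanishes on $(\mathbb K^{n\times n})^d$ for all $j>L_n$; if $L_n>-\infty$ then $f_{L_n}$ does not vanish identically on $(\mathbb K^{n\times n})^d$; and for $X\in(\mathbb K^{n\times n})^d$, $$f(X)=\sum_{j=0}^\infty f_j(X)=\sum_{j=0}^{L_n}f_j(X).$$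
   Context: $n\times n$ matrices over $\mathbb K^d$ are identified with $d$-tuples $X=(X_1,\dots,X_d)$ of $n\times n$ matrices over $\mathbb K$; $(\mathbb K^d)_{\mathrm{nc}}=\coprod_n(\mathbb K^{n\times n})^d$, $\mathcal N_{\mathrm{nc}}=\coprod_n\mathcal N^{n\times n}$. A nc function $f$ satisfies $f((\mathbb K^{n\times n})^d)\subseteq\mathcal N^{n\times n}$, $f(X\oplus Y)=f(X)\oplus f(Y)$ (componentwise block diagonal direct sums), and $f(SXS^{-1})=Sf(X)S^{-1}$ for invertible $S\in\mathbb K^{n\times n}$. $\mathcal G_d$ is the free monoid on $g_1,\dots,g_d$; for $w=g_{i_1}\cdots g_{i_\ell}$, $|w|=\ell$, $x^w=x_{i_1}\cdots x_{i_\ell}$, $X^w=X_{i_1}\cdots X_{i_\ell}$. A homogeneous nc polynomial of degree $j$ with coefficients in $\mathcal N$ is a finite formal sum $p=\sum_{|w|=j}p_wx^w$ with $p_w\in\mathcal N$ (possibly all zero); it is evaluated by $p(X)=\sum_{|w|=j}X^wp_w\in\mathcal N^{n\times n}$, where $(X^wp_w)_{ab}=(X^w)_{ab}p_w$. *)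

(* Defs.v *)
From HB Require Import structures.
From mathcomp Require Import all_boot all_order all_algebra.
Set Implicit Arguments. Unset Strict Implicit. Unset Printing Implicit Defensive.
Import Order.TTheory GRing.Theory Num.Theory.
Local Open Scope ring_scope.

Section NC.
Variables (K : fieldType) (N : lmodType K) (d : nat).

Definition infinite_field : Prop := forall s : seq K, exists x : K, x \notin s.

(* A d-tuple of n x n matrices over K, i.e. an n x n matrix over K^d. *)
Definition tup (n : nat) := 'I_d -> 'M[K]_n.

Definition ncfun := forall n : nat, tup n -> 'M[N]_n.

Definition lactmx n (S : 'M[K]_n) (A : 'M[N]_n) : 'M[N]_n :=
  \matrix_(i, j) \sum_(k < n) S i k *: A k j.
Definition ractmx n (A : 'M[N]_n) (T : 'M[K]_n) : 'M[N]_n :=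
  \matrix_(i, j) \sum_(k < n) T k j *: A i k.

Definition nc_function (f : ncfun) : Prop :=
  (forall n m (X : tup n) (Y : tup m),
      f (n + m)%N (fun i => block_mx (X i) 0 0 (Y i)) = block_mx (f n X) 0 0 (f m Y))
  /\ (forall n (X : tup n) (S : 'M[K]_n), S \in unitmx ->
      f n (fun i => S *m X i *m invmx S) = lactmx S (ractmx (f n X) (invmx S))).

(* Commutative monomials in the d n^2 variables (X_i)_{jk}, with exponents <= D. *)
Definition cmon (n D : nat) := {ffun 'I_d * 'I_n * 'I_n -> 'I_D.+1}.
Definition cmon_deg n D (m : cmon n D) : nat := (\sum_v (m v : nat))%N.
Definition cmon_eval n D (m : cmon n D) (X : tup n) : K :=
  \prod_v (X v.1.1 v.1.2 v.2) ^+ (m v).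

Definition poly_le n (g : tup n -> 'M[N]_n) (D : nat) : Prop :=
  exists c : cmon n D -> 'M[N]_n, forall X : tup n,
    g X = \matrix_(a, b) \sum_(m : cmon n D | (cmon_deg m <= D)%N) cmon_eval m X *: c m a b.

(* Degree <= D, with D = None standing for -oo (the zero function). *)
Definition poly_le_opt n (g : tup n -> 'M[N]_n) (D : option nat) : Prop :=
  match D with None => forall X, g X = 0 | Some l => poly_le g l end.

(* g has degree exactly L (L = None means deg = -oo, i.e. g = 0). *)
Definition poly_deg n (g : tup n -> 'M[N]_n) (L : option nat) : Prop :=
  match L with
  | None => forall X, g X = 0
  | Some l => poly_le g l /\
      ~ poly_le_opt g (if l is l'.+1 then Some l' else None)
  end.

(* Homogeneous nc polynomial of degree j with coefficients in N:
   a coefficient p_w for each word w of length j in g_1..g_d. *)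
Definition hncpoly (j : nat) := j.-tuple 'I_d -> N.

Definition word_eval n j (w : j.-tuple 'I_d) (X : tup n) : 'M[K]_n :=
  \big[mulmx/1%:M]_(i <- w) X i.

Definition hnc_eval j (p : hncpoly j) n (X : tup n) : 'M[N]_n :=
  \matrix_(a, b) \sum_(w : j.-tuple 'I_d) word_eval w X a b *: p w.

Definition hnc_vanishes j (p : hncpoly j) n : Prop :=
  forall X : tup n, hnc_eval p X = 0.

(* number of terms in sum_{j=0}^{L}: L+1, or 0 when L = -oo *)
Definition obound (L : option nat) : nat := if L is Some l then l.+1 else 0%N.

Definition nc_decomp (f : ncfun) (L : nat -> option nat)
    (fs : forall j, hncpoly j) : Prop :=
  forall n : nat,
    (forall j, (obound (L n) <= j)%N -> hnc_vanishes (fs j) n)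
    /\ (forall l, L n = Some l -> ~ hnc_vanishes (fs l) n)
    /\ (forall X : tup n, f n X = \sum_(j < obound (L n)) hnc_eval (fs j) X).

End NC.

(* Main.v *)
Require Import Defs.
From HB Require Import structures.
From mathcomp Require Import all_boot all_order all_algebra.
From Stdlib Require Import FunctionalExtensionality.
From mathcomp Require Import zify ring.
Unset Printing Implicit Defensive.
Import Order.TTheory GRing.Theory Num.Theory.
Local Open Scope ring_scope.

Section P.
Variables (K : fieldType) (N : lmodType K) (d : nat) (f : ncfun N d).
Hypothesis Hnc : nc_function f.
Lemma core n q (X : tup K d n) (Y : tup K d q) (T : 'M[K]_(n,q)) (E : 'I_d -> 'M[K]_(n,q)) :
  (forall i, E i = T *m Y i - X i *m T) ->
  forall a b, (f (n+q)%N (fun i => block_mx (X i) (E i) 0 (Y i))) (lshift q a) (rshift n b)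
   = \sum_(k < q) T a k *: (f q Y) k b - \sum_(k < n) T k b *: (f n X) a k.
Proof.
move=> HE a b.
case: Hnc => Hds Hsim.
pose S : 'M[K]_(n+q) := block_mx 1%:M T 0 1%:M.
pose S' : 'M[K]_(n+q) := block_mx 1%:M (-T) 0 1%:M.
have HSS : S *m S' = 1%:M.
  by rewrite mulmx_block !mul1mx !mulmx1 !mul0mx !mulmx0 !addr0 add0r addNr scalar_mx_block.
have Su : S \in unitmx by case: (mulmx1_unit HSS).
have iS : invmx S = S'.
  by rewrite -[invmx S]mulmx1 -HSS mulmxA mulVmx // mul1mx.
have -> : (fun i => block_mx (X i) (E i) 0 (Y i)) = (fun i => S *m block_mx (X i) 0 0 (Y i) *m invmx S).
  apply: functional_extensionality => i.
  rewrite iS !mulmx_block HE !mul1mx !mulmx1 !mul0mx !mulmx0 !addr0 !add0r.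
  by rewrite mul0mx add0r mulmxN addrC.
rewrite (Hsim (n+q)%N (fun i => block_mx (X i) 0 0 (Y i)) S Su) Hds /lactmx /ractmx !mxE big_split_ord /= iS.
under eq_bigr => i _ do rewrite /S block_mxEul mxE big_split_ord /=.
under [X in _ + X]eq_bigr => i _ do rewrite /S block_mxEur mxE big_split_ord /=.
rewrite addrC; congr (_ + _).
  apply: eq_bigr => i _; congr (_ *: _).
  rewrite big1 ?add0r; last first. by move=> j _; rewrite block_mxEdl [X in _ *: X]mxE scaler0.
  under eq_bigr => j _ do rewrite block_mxEdr /S' block_mxEdr mxE.
  rewrite (bigD1 b) //= big1 ?addr0 ?eqxx ?scale1r // => j ne.
  by rewrite (negbTE ne) scale0r.
rewrite (bigD1 a) //= [X in _ + X]big1 ?addr0; last first.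
  by move=> i ne; rewrite mxE eq_sym (negbTE ne) scale0r.
rewrite mxE eqxx scale1r [X in _ + X]big1 ?addr0; last first.
  by move=> j _; rewrite block_mxEur [X in _ *: X]mxE scaler0.
rewrite -sumrN; apply: eq_bigr => j _.
by rewrite block_mxEul /S' block_mxEur mxE scaleNr.
Qed.

Definition wev {n} (s : seq 'I_d) (X : tup K d n) : 'M[K]_n := \big[mulmx/1%:M]_(i <- s) X i.

Definition tw (j : nat) : seq (seq 'I_d) := [seq val t | t : j.-tuple 'I_d].

Fixpoint Wd (m : nat) : seq (seq 'I_d) :=
  match m with 0 => tw 0 | m'.+1 => Wd m' ++ tw m'.+1 end.

Lemma mem_tw j s : (s \in tw j) = (size s == j).
Proof.
apply/mapP/idP => [[t _ ->]|/eqP <-]; first by rewrite size_tuple.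
by exists (in_tuple s); rewrite ?mem_enum.
Qed.

Lemma uniq_tw j : uniq (tw j).
Proof. by rewrite map_inj_uniq ?enum_uniq //; apply: val_inj. Qed.

Lemma mem_Wd m s : (s \in Wd m) = (size s <= m)%N.
Proof.
elim: m => [|m IH] /=; first by rewrite mem_tw leqn0.
by rewrite mem_cat IH mem_tw [(_ <= m.+1)%N]leq_eqVlt orbC.
Qed.

Lemma uniq_Wd m : uniq (Wd m).
Proof.
elim: m => [|m IH] /=; first exact: uniq_tw.
rewrite cat_uniq IH uniq_tw andbT /=; apply/hasPn => s.
by rewrite mem_tw mem_Wd => /eqP ->; rewrite ltnn.
Qed.

Lemma sum_Wd (V : zmodType) m (F : seq 'I_d -> V) :
  \sum_(x <- Wd m) F x = \sum_(j < m.+1) \sum_(t : j.-tuple 'I_d) F t.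
Proof.
elim: m => [|m IH] /=.
  by rewrite big_ord1 /tw big_map big_enum; apply: eq_bigl.
rewrite big_cat IH [RHS]big_ord_recr /= /tw big_map big_enum; congr (_ + _); apply: eq_bigl.
Qed.

Definition q m := size (Wd m).
Definition wm {m} (k : 'I_(q m)) : seq 'I_d := nth [::] (Wd m) k.

Lemma sumW (V : zmodType) m (G : seq 'I_d -> V) :
  \sum_(k < q m) G (wm k) = \sum_(x <- Wd m) G x.
Proof. by rewrite (big_nth [::]) big_mkord. Qed.

Lemma size_wm m (k : 'I_(q m)) : (size (wm k) <= m)%N.
Proof. by rewrite -mem_Wd mem_nth. Qed.

Lemma wm_inj m : injective (@wm m).
Proof. move=> k k' /eqP; rewrite nth_uniq ?uniq_Wd // => /eqP; apply: val_inj. Qed.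

Lemma seq_delta (V : zmodType) (r : seq (seq 'I_d)) (g : seq 'I_d -> V) y :
  uniq r -> \sum_(x <- r) (if x == y then g x else 0) = if y \in r then g y else 0.
Proof.
elim: r => [|x r IH]; first by rewrite big_nil.
rewrite big_cons /= in_cons => /andP [xr ur]; rewrite IH //.
case: (eqVneq x y) => [<-|ne] /=; first by rewrite (negbTE xr) addr0.
by rewrite add0r.
Qed.

Lemma sumW_delta (V : zmodType) m (g : seq 'I_d -> V) y :
  \sum_(k < q m) (if wm k == y then g (wm k) else 0) = if (size y <= m)%N then g y else 0.
Proof.
by rewrite (sumW _ m (fun x => if x == y then g x else 0)) seq_delta ?uniq_Wd // mem_Wd.
Qed.

Lemma e0_proof m : (index [::] (Wd m) < q m)%N.
Proof. by rewrite index_mem mem_Wd. Qed.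
Definition e0 m : 'I_(q m) := Ordinal (e0_proof m).
Lemma wm_e0 m : wm (e0 m) = [::].
Proof. by rewrite /wm nth_index // mem_Wd. Qed.

Lemma wm_onto m s : (size s <= m)%N -> exists k : 'I_(q m), wm k = s.
Proof.
rewrite -mem_Wd => H; exists (Ordinal (etrans (index_mem _ _) H)).
by rewrite /wm nth_index.
Qed.

Definition Lam m : tup K d (q m) :=
  fun i => \matrix_(a, b) ((wm a == i :: wm b)%:R : K).

Lemma wev_cons n i s (X : tup K d n) : wev (i :: s) X = X i *m wev s X.
Proof. by rewrite /wev big_cons. Qed.

Lemma wev_Lam m u a b : wev u (Lam m) a b = ((wm a == u ++ wm b)%:R : K).
Proof.
elim: u a => [|i u IH] a.
  by rewrite /wev big_nil mxE /= (inj_eq (@wm_inj m)); reflexivity.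
rewrite wev_cons mxE.
rewrite (eq_bigr (fun k => if wm k == u ++ wm b then (wm a == i :: wm k)%:R else 0)); last first.
  by move=> k _; rewrite mxE IH; case: (wm k == u ++ wm b); rewrite ?mulr1 ?mulr0.
rewrite (sumW_delta _ m (fun x => ((wm a == i :: x)%:R : K))).
case: leqP => // H; case: eqP => // E.
by have := size_wm _ a; rewrite E /= ltnNge (ltnW H).
Qed.


Definition cm' m (k : 'I_(q m)) : N := f (q m) (Lam m) k (e0 m).
Definition cm m (s : seq 'I_d) : N := \sum_(k < q m) (if wm k == s then cm' m k else 0).

Lemma cm_wm m (k : 'I_(q m)) : cm m (wm k) = cm' m k.
Proof.
rewrite /cm (bigD1 k) //= eqxx big1 ?addr0 // => k' ne.
by rewrite (inj_eq (@wm_inj m)) (negbTE ne).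
Qed.

Lemma wev_nil n (X : tup K d n) : wev [::] X = 1%:M.
Proof. by rewrite /wev big_nil. Qed.

Lemma Gnil p (Z : tup K d p) m :
  (forall u : seq 'I_d, size u = m.+1 -> wev u Z = 0) ->
  forall a c, f p Z a c = \sum_(k < q m) wev (wm k) Z a c *: cm' m k.
Proof.
move=> Hz a c.
pose T : 'M[K]_(p, q m) := \matrix_(k, b) wev (wm b) Z k c.
have HT : forall i, (fun _ : 'I_d => 0 : 'M[K]_(p, q m)) i = T *m Lam m i - Z i *m T.
  move=> i; apply/esym/eqP; rewrite subr_eq0; apply/eqP/matrixP => k b.
  rewrite !mxE.
  rewrite (eq_bigr (fun b' => if wm b' == i :: wm b then wev (wm b') Z k c else 0)); last first.
    by move=> b' _; rewrite !mxE; case: (wm b' == i :: wm b); rewrite ?mulr1 ?mulr0.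
  rewrite (sumW_delta _ m (fun x => wev x Z k c)).
  have -> : \sum_(j < p) Z i k j * T j b = wev (i :: wm b) Z k c.
    by rewrite wev_cons mxE; apply: eq_bigr => j _; rewrite mxE.
  case: leqP => // H.
  have Hs : size (i :: wm b) = m.+1.
    by apply/eqP; rewrite /= eqSS eqn_leq size_wm.
  by rewrite Hz // mxE.
have := @core p (q m) Z (Lam m) T (fun _ => 0) HT a (e0 m).
case: Hnc => Hds _.
rewrite /= Hds block_mxEur mxE => /eqP; rewrite eq_sym subr_eq0 => /eqP HAB.
rewrite (bigD1 c) //= [X in _ + X]big1 ?addr0 in HAB; last first.
  by move=> k ne; rewrite mxE wm_e0 wev_nil mxE (negbTE ne) scale0r.
rewrite mxE wm_e0 wev_nil mxE eqxx scale1r in HAB; rewrite -HAB.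
by apply: eq_bigr => k _; rewrite mxE.
Qed.

Lemma cm_consistent j m s : (size s <= j)%N -> (j <= m)%N -> cm j s = cm m s.
Proof.
move=> Hsj Hjm.
have Hf : forall a : 'I_(q j), f (q j) (Lam j) a (e0 j) = cm m (wm a).
  move=> a; rewrite (Gnil _ (Lam j) m); last first.
    move=> u Hu; apply/matrixP => x y; rewrite wev_Lam mxE.
    case: eqP => // E; have := size_wm _ x; rewrite E size_cat Hu.
    by move=> H; have := leq_trans H Hjm; rewrite ltnNge leq_addr.
  rewrite (eq_bigr (fun k => if wm k == wm a then cm m (wm k) else 0)); last first.
    move=> k _; rewrite wev_Lam wm_e0 cats0 cm_wm eq_sym.
    by case: (wm k == wm a); rewrite ?scale1r ?scale0r.
  rewrite (sumW_delta _ m (fun x => cm m x)).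
  by rewrite (leq_trans (size_wm _ a) Hjm).
rewrite /cm (eq_bigr (fun k => if wm k == s then cm m (wm k) else 0)); last first.
  by move=> k _; rewrite /cm' Hf.
by rewrite (sumW_delta _ j (fun x => cm m x)) Hsj.
Qed.


Definition Rep p D (c : cmon d p D -> 'M[N]_p) := forall Y : tup K d p,
  f p Y = \matrix_(a, b) \sum_(mo : cmon d p D | (cmon_deg mo <= D)%N) cmon_eval mo Y *: c mo a b.

Definition Pc {p D} (c : cmon d p D -> 'M[N]_p) (X : tup K d p) a b i : N :=
  \sum_(mo : cmon d p D | (cmon_deg mo <= D)%N && (cmon_deg mo == i)) cmon_eval mo X *: c mo a b.

Lemma sum_by (V : zmodType) (I : finType) (P : pred I) (g : I -> nat) M (F : I -> V) :
  (forall x, P x -> g x < M)%N ->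
  \sum_(x | P x) F x = \sum_(i < M) \sum_(x | P x && (g x == i)) F x.
Proof.
move=> H; symmetry.
under eq_bigr do rewrite big_mkcond.
rewrite exchange_big /= [RHS]big_mkcond; apply: eq_bigr => x _.
case Px: (P x) => /=; last by rewrite big1.
rewrite (bigD1 (Ordinal (H x Px))) //= eqxx big1 ?addr0 // => i ne.
case: eqP => // E; case/eqP: ne; apply: val_inj; by rewrite /= E.
Qed.

Lemma cmon_scale p D (mo : cmon d p D) (X : tup K d p) (s : K) :
  cmon_eval mo (fun i => s *: X i) = s ^+ cmon_deg mo * cmon_eval mo X.
Proof.
rewrite /cmon_eval /cmon_deg.
under eq_bigr do rewrite mxE exprMn.
by rewrite big_split /= prodrXr.
Qed.

Lemma scale_rep p D c (HR : Rep p D c) (X : tup K d p) (s : K) a b :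
  f p (fun i => s *: X i) a b = \sum_(i < D.+1) s ^+ i *: Pc c X a b i.
Proof.
rewrite HR mxE (sum_by _ _ _ (fun mo => cmon_deg mo) D.+1); last by [].
apply: eq_bigr => i _; rewrite /Pc scaler_sumr; apply: eq_bigr => mo /andP [_ /eqP E].
by rewrite cmon_scale E scalerA.
Qed.

Lemma affine_rep p D c (HR : Rep p D c) (A B : tup K d p) a b :
  exists v : nat -> N, forall s : K,
    f p (fun i => A i + s *: B i) a b = \sum_(i < D.+1) s ^+ i *: v i.
Proof.
pose ql (v : 'I_d * 'I_p * 'I_p) : {poly K} := (B v.1.1 v.1.2 v.2)%:P * 'X + (A v.1.1 v.1.2 v.2)%:P.
pose Pm (mo : cmon d p D) : {poly K} := \prod_v ql v ^+ mo v.
exists (fun i => \sum_(mo : cmon d p D | (cmon_deg mo <= D)%N) (Pm mo)`_i *: c mo a b).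
move=> s; rewrite HR mxE.
have HP : forall mo, cmon_eval mo (fun i => A i + s *: B i) = (Pm mo).[s].
  move=> mo; rewrite /cmon_eval /Pm horner_prod; apply: eq_bigr => v _.
  rewrite horner_exp /ql !hornerE !mxE; congr (_ ^+ _).
  by rewrite addrC mulrC.
have Hql : forall v, (size (ql v) <= 2)%N.
  move=> v; rewrite /ql size_MXaddC; case: ifP => // _.
  by rewrite ltnS size_polyC_leq1.
have Hsz : forall mo, (size (Pm mo) <= (cmon_deg mo).+1)%N.
  move=> mo; rewrite /Pm /cmon_deg.
  apply: (big_ind2 (fun (P : {poly K}) (n : nat) => size P <= n.+1)%N).
  - by rewrite size_poly1.
  - move=> P1 n1 P2 n2 H1 H2; apply: leq_trans (size_polyMleq _ _) _.
    lia.
  - move=> v _; apply: leq_trans (size_poly_exp_leq _ _) _.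
    rewrite ltnS; have := Hql v; case: (size (ql v)) => [|[|[|x]]] //= _;
      by rewrite ?mul0n ?mul1n.
rewrite (eq_bigr (fun mo => \sum_(i < D.+1) s ^+ i *: ((Pm mo)`_i *: c mo a b))); last first.
  move=> mo Hmo; rewrite HP (@horner_coef_wide _ D.+1 _ _ (leq_trans (Hsz mo) _)) // scaler_suml.
  by apply: eq_bigr => i _; rewrite scalerA mulrC.
rewrite exchange_big; apply: eq_bigr => i _; by rewrite scaler_sumr.
Qed.

Hypothesis Hinf : infinite_field K.

Lemma pts M : exists r : seq K, size r = M /\ uniq r /\ 0 \notin r.
Proof.
elim: M => [|M [r [Hr [ur r0]]]]; first by exists [::].
have [x Hx] := Hinf (0 :: r).
exists (x :: r); rewrite /= Hr; split => //; move: Hx; rewrite !in_cons negb_or => /andP [x0 xr].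
by rewrite xr ur negb_or eq_sym x0 r0.
Qed.

Lemma ident M (v : nat -> N) :
  (forall s : K, s != 0 -> \sum_(i < M) s ^+ i *: v i = 0) -> forall i, (i < M)%N -> v i = 0.
Proof.
move=> H i Hi; have [r [Hr [ur r0]]] := pts M.
pose a : 'rV[K]_M := \row_k r`_k.
pose V := Vandermonde M a.
have Vu : V \in unitmx.
  rewrite unitmxE unitfE det_Vandermonde; apply/prodf_neq0 => x _.
  apply/prodf_neq0 => y xy; rewrite !mxE subr_eq0; apply/negP => /eqP E.
  move/eqP: E; rewrite nth_uniq ?Hr // => /eqP E.
  by move: xy; rewrite E ltnn.
have Hk : forall k : 'I_M, \sum_(i0 < M) V i0 k *: v i0 = 0.
  move=> k; rewrite -[RHS](H r`_k); first by apply: eq_bigr => i0 _; rewrite !mxE.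
  by apply/eqP => E; move: r0; rewrite -E mem_nth // Hr.
pose i' := Ordinal Hi.
have -> : v i = \sum_(i0 < M) (V *m invmx V) i0 i' *: v i0.
  rewrite mulmxV // (bigD1 i') //= mxE eqxx scale1r big1 ?addr0 // => j ne.
  by rewrite mxE (negbTE ne) scale0r.
under eq_bigr do rewrite mxE scaler_suml.
rewrite exchange_big big1 // => k _.
rewrite (eq_bigr (fun j => invmx V k i' *: (V j k *: v j))); last first.
  by move=> j _; rewrite scalerA mulrC.
by rewrite -scaler_sumr Hk scaler0.
Qed.


Lemma pad (V : zmodType) B M (F : nat -> V) : (B <= M)%N ->
  \sum_(i < M) (if (i < B)%N then F i else 0) = \sum_(i < B) F i.
Proof. by move=> H; rewrite (big_ord_widen M F H) [RHS]big_mkcond. Qed.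

Lemma scale_if (V : lmodType K) (b : bool) (x : K) (v : V) :
  x *: (if b then v else 0) = if b then x *: v else 0.
Proof. by case: b; rewrite ?scaler0. Qed.

Lemma Gen n (X : tup K d n) m D c (HR : Rep n D c)
  (Hall : forall p, exists D c, @Rep p D c) :
  (D <= m)%N -> forall a c0, f n X a c0 = \sum_(k < q m) wev (wm k) X a c0 *: cm' m k.
Proof.
move=> HDm a c0.
pose Tp (s : K) : 'M[K]_(n, q m) :=
  \matrix_(k, b) (s ^+ size (wm b) / s ^+ m.+1 * wev (wm b) X k c0).
pose Ec (i : 'I_d) : 'M[K]_(n, q m) :=
  \matrix_(k, b) (- ((size (wm b) == m)%:R * wev (i :: wm b) X k c0)).
have HE : forall s : K, s != 0 -> forall i, Ec i = Tp s *m Lam m i - (s *: X i) *m Tp s.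
  move=> s s0 i; apply/matrixP => k b; rewrite !mxE.
  rewrite (eq_bigr (fun b' => if wm b' == i :: wm b then
     s ^+ size (wm b') / s ^+ m.+1 * wev (wm b') X k c0 else 0)); last first.
    by move=> b' _; rewrite !mxE; case: (wm b' == i :: wm b); rewrite ?mulr1 ?mulr0.
  rewrite (sumW_delta _ m (fun x => s ^+ size x / s ^+ m.+1 * wev x X k c0)).
  have -> : \sum_(j < n) (s *: X i) k j * Tp s j b =
      s ^+ (size (wm b)).+1 / s ^+ m.+1 * wev (i :: wm b) X k c0.
    rewrite wev_cons mxE mulr_sumr; apply: eq_bigr => j _; rewrite !mxE.
    by rewrite (exprS s (size (wm b))); ring.
  have := size_wm _ b; rewrite leq_eqVlt => /orP [/eqP Hs|Hs].
    rewrite /= Hs ltnn eqxx sub0r mul1r divff ?mul1r //.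
    by rewrite expf_neq0.
  rewrite /= Hs subrr.
  by rewrite (_ : (size (wm b) == m) = false) ?mul0r ?oppr0 //; apply/negbTE; rewrite ltn_eqF.
pose r k := wev (wm k) X a c0 *: cm' m k.
have [D' [c' HR']] := Hall (n + q m)%N.
pose A i : 'M[K]_(n + q m) := block_mx 0 (Ec i) 0 (Lam m i).
pose B i : 'M[K]_(n + q m) := block_mx (X i) 0 0 0.
have [qv Hq] := affine_rep _ _ _ HR' A B (lshift (q m) a) (rshift n (e0 m)).
have key : forall s : K, s != 0 -> f n (fun i => s *: X i) a c0 =
    \sum_k s ^+ size (wm k) *: r k - s ^+ m.+1 *: \sum_(i < D'.+1) s ^+ i *: qv i.
  move=> s s0.
  have := @core n (q m) (fun i => s *: X i) (Lam m) (Tp s) Ec (HE s s0) a (e0 m).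
  have -> : (fun i => block_mx (s *: X i) (Ec i) 0 (Lam m i)) = (fun i => A i + s *: B i).
    apply: functional_extensionality => i.
    by rewrite /A /B scale_block_mx add_block_mx !scaler0 !addr0 add0r.
  rewrite Hq => HQ.
  have E2 : \sum_k Tp s k (e0 m) *: f n (fun i => s *: X i) a k =
      (s ^+ m.+1)^-1 *: f n (fun i => s *: X i) a c0.
    rewrite (bigD1 c0) //= big1 ?addr0; last first.
      by move=> k ne; rewrite mxE wm_e0 wev_nil mxE (negbTE ne) mulr0 scale0r.
    by rewrite mxE wm_e0 wev_nil mxE eqxx mulr1 expr0 mul1r.
  have E1 : s ^+ m.+1 *: \sum_k Tp s a k *: f (q m) (Lam m) k (e0 m) =
      \sum_k s ^+ size (wm k) *: r k.
    rewrite scaler_sumr; apply: eq_bigr => k _; rewrite /r /cm' mxE !scalerA.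
    by congr (_ *: _); field; rewrite expf_neq0.
  rewrite HQ scalerBr E1 E2 scalerA divff ?expf_neq0 // scale1r.
  by rewrite opprB addrCA subrr addr0.
pose M := (m.+1 + D'.+1)%N.
pose coef i := (if (i < D.+1)%N then Pc c X a c0 i else 0)
   - \sum_(k | size (wm k) == i) r k
   + (if (m.+1 <= i)%N then qv (i - m.+1)%N else 0).
have Hc : forall i, (i < M)%N -> coef i = 0.
  apply: ident => s s0; rewrite /coef.
  under eq_bigr do rewrite scalerDr scalerBr.
  rewrite big_split /= sumrB.
  rewrite [Z in Z - _ + _](eq_bigr (fun i : 'I_M =>
     if (i < D.+1)%N then s ^+ i *: Pc c X a c0 i else 0)); last first.
    by move=> i _; rewrite scale_if.
  have HP : (D.+1 <= M)%N by rewrite /M; lia.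
  have := pad _ D.+1 M (fun i => s ^+ i *: Pc c X a c0 i) HP; rewrite /= => ->.
  rewrite -scale_rep // key //.
  have -> : \sum_(i < M) s ^+ i *: \sum_(k | size (wm k) == i) r k
      = \sum_k s ^+ size (wm k) *: r k.
    rewrite (sum_by _ _ predT (fun k => size (wm k)) M (fun k => s ^+ size (wm k) *: r k)).
      apply: eq_bigr => i _; rewrite scaler_sumr; apply: eq_bigr => k /eqP <-.
      by [].
    by move=> k _; have := size_wm _ k; rewrite /M; lia.
  have -> : \sum_(i < M) s ^+ i *: (if (m.+1 <= i)%N then qv (i - m.+1)%N else 0)
      = s ^+ m.+1 *: \sum_(i < D'.+1) s ^+ i *: qv i.
    rewrite /M big_split_ord /= big1 ?add0r; last first.
      by move=> i _; rewrite leqNgt ltn_ord scaler0.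
    rewrite scaler_sumr; apply: eq_bigr => i _.
    by rewrite leq_addr addKn exprD scalerA.
  by move: (\sum_k _) (_ *: _) => x y; rewrite addrAC subrK subrr.
have HX : f n X a c0 = f n (fun i => 1 *: X i) a c0.
  by congr (f n _ a c0); apply: functional_extensionality => i; rewrite scale1r.
rewrite HX (scale_rep _ _ _ HR).
under eq_bigr do rewrite expr1n scale1r.
have := pad _ D.+1 m.+1 (fun i => Pc c X a c0 i) HDm.
rewrite /= => <-.
rewrite (sum_by _ _ predT (fun k => size (wm k)) m.+1 (fun k => r k)); last first.
  by move=> k _; rewrite ltnS size_wm.
apply: eq_bigr => i _.
have := Hc i (leq_trans (ltn_ord i) (leq_addr _ _)).
rewrite /coef [(m.+1 <= _)%N]leqNgt ltn_ord /= addr0 => /eqP; rewrite subr_eq0 => /eqP ->.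
by apply: eq_bigl.
Qed.


Variable L : nat -> option nat.
Hypothesis Hdeg : forall n, poly_deg (f n) (L n).

Lemma rep_of n : exists D c, Rep n D c /\ (forall l, L n = Some l -> D = l)
  /\ (L n = None -> forall mo, c mo = 0).
Proof.
have := Hdeg n; case: (L n) => [l [[c Hc] _]|/= H0].
  by exists l, c; split => //; split => // l' [].
exists 0%N, (fun _ => 0); split; last by split.
move=> Y; rewrite H0; apply/matrixP => a b; rewrite !mxE big1 // => mo _.
by rewrite scaler0.
Qed.

Lemma Hall p : exists D c, @Rep p D c.
Proof. by have [D [c [H _]]] := rep_of p; exists D, c. Qed.

Definition fsd (j : nat) : hncpoly N d j := fun t => cm j (val t).

Lemma hnc_wev j (p : hncpoly N d j) n (X : tup K d n) a b :
  hnc_eval p X a b = \sum_(t : j.-tuple 'I_d) wev t X a b *: p t.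
Proof. by rewrite mxE. Qed.

Lemma expand n (X : tup K d n) m D c (HR : Rep n D c) : (D <= m)%N ->
  forall a b, f n X a b = \sum_(j < m.+1) hnc_eval (fsd j) X a b.
Proof.
move=> HDm a b; rewrite (Gen _ X m _ _ HR Hall HDm).
under eq_bigr do rewrite -cm_wm.
rewrite (sumW _ m (fun x => wev x X a b *: cm m x)) sum_Wd.
apply: eq_bigr => j _; rewrite hnc_wev; apply: eq_bigr => t _.
rewrite /fsd (cm_consistent j m) ?size_tuple //.
by rewrite -ltnS.
Qed.

Lemma wev_scale n u (X : tup K d n) (s : K) :
  wev u (fun i => s *: X i) = s ^+ size u *: wev u X.
Proof.
elim: u => [|i u IH]; first by rewrite !wev_nil scale1r.
by rewrite !wev_cons IH -scalemxAl -!scalemxAr scalerA -exprS.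
Qed.

Lemma hnc_scale j (p : hncpoly N d j) n (X : tup K d n) (s : K) a b :
  hnc_eval p (fun i => s *: X i) a b = s ^+ j *: hnc_eval p X a b.
Proof.
rewrite !hnc_wev scaler_sumr; apply: eq_bigr => t _.
by rewrite wev_scale mxE size_tuple scalerA.
Qed.

Lemma compare (P H : nat -> N) B1 B2 :
  (forall s : K, s != 0 -> \sum_(i < B1) s ^+ i *: P i = \sum_(i < B2) s ^+ i *: H i) ->
  forall i, (if (i < B1)%N then P i else 0) = (if (i < B2)%N then H i else 0).
Proof.
move=> Hs i.
case: (ltnP i (B1 + B2)) => Hi; last first.
  by rewrite !ifN // -leqNgt; apply: leq_trans Hi; rewrite ?leq_addl ?leq_addr.
apply/eqP; rewrite -subr_eq0; apply/eqP; move: i Hi.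
apply: ident => s s0.
under eq_bigr do rewrite scalerBr !scale_if.
rewrite sumrB.
have := pad _ B1 (B1 + B2) (fun i => s ^+ i *: P i) (leq_addr _ _); rewrite /= => ->.
have := pad _ B2 (B1 + B2) (fun i => s ^+ i *: H i) (leq_addl _ _); rewrite /= => ->.
by rewrite Hs // subrr.
Qed.

Lemma vanish_hi n j : (obound (L n) <= j)%N -> hnc_vanishes (fsd j) n.
Proof.
move=> Hj X; have [D [c [HR [HS HN]]]] := rep_of n.
apply/matrixP => a b; rewrite [RHS]mxE.
have Hc : forall s : K, s != 0 -> \sum_(i < D.+1) s ^+ i *: Pc c X a b i =
    \sum_(i < (maxn D j).+1) s ^+ i *: hnc_eval (fsd i) X a b.
  move=> s s0; rewrite -(scale_rep _ _ _ HR).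
  rewrite (expand _ (fun i => s *: X i) (maxn D j) _ _ HR (leq_maxl _ _)).
  by apply: eq_bigr => i _; rewrite hnc_scale.
have := compare (fun i => Pc c X a b i) (fun i => hnc_eval (fsd i) X a b) D.+1 (maxn D j).+1 Hc j.
rewrite /= [(j < (maxn D j).+1)%N]ltnS leq_maxr => <-.
case: ifP => // Hjd.
case E : (L n) Hj => [l|] Hj.
  have HDl := HS l E; rewrite HDl in Hjd; move: Hj Hjd => /= Hj Hjd; lia.
by rewrite /Pc big1 // => mo _; rewrite HN // mxE scaler0.
Qed.


Lemma le_deg n D (mo : cmon d n D) v : (mo v <= cmon_deg mo)%N.
Proof. by rewrite /cmon_deg (bigD1 v) //= leq_addr. Qed.

Lemma nonvan n l : L n = Some l -> ~ hnc_vanishes (fsd l) n.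
Proof.
move=> E Hv; have [D [c [HR [HS _]]]] := rep_of n.
have HDl : l = D := esym (HS l E).
subst l.
have := Hdeg n; rewrite E => [[_ Hnot]]; apply: Hnot.
have Hpc : forall X a b, Pc c X a b D = 0.
  move=> X a b.
  have Hc : forall s : K, s != 0 -> \sum_(i < D.+1) s ^+ i *: Pc c X a b i =
      \sum_(i < D.+1) s ^+ i *: hnc_eval (fsd i) X a b.
    move=> s s0; rewrite -(scale_rep _ _ _ HR).
    rewrite (expand _ (fun i => s *: X i) D _ _ HR (leqnn D)).
    by apply: eq_bigr => i _; rewrite hnc_scale.
  have := compare (fun i => Pc c X a b i) (fun i => hnc_eval (fsd i) X a b) D.+1 D.+1 Hc D.
  by rewrite /= ltnSn => ->; rewrite Hv mxE.
clear HS E; move: c HR Hpc Hv; case: D => [|l'] c HR Hpc Hv /=.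
  move=> X; apply/matrixP => a b; rewrite HR !mxE -[RHS](Hpc X a b).
  by apply: eq_bigl => mo; rewrite leqn0; case: eqP.
pose wid (mo : cmon d n l') : cmon d n l'.+1 := [ffun v => widen_ord (leqnSn l'.+1) (mo v)].
pose nar (mo : cmon d n l'.+1) : cmon d n l' := [ffun v => inord (mo v)].
have deg_wid : forall mo, cmon_deg (wid mo) = cmon_deg mo.
  by move=> mo; rewrite /cmon_deg; apply: eq_bigr => v _; rewrite ffunE.
have ev_wid : forall mo (X : tup K d n), cmon_eval (wid mo) X = cmon_eval mo X.
  by move=> mo X; rewrite /cmon_eval; apply: eq_bigr => v _; rewrite ffunE.
exists (fun mo => c (wid mo)) => X; rewrite HR; apply/matrixP => a b; rewrite !mxE.
rewrite (bigID (fun mo => cmon_deg mo == l'.+1)) /=.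
have -> : \sum_(mo | (cmon_deg mo <= l'.+1)%N && (cmon_deg mo == l'.+1))
    cmon_eval mo X *: c mo a b = 0 by exact: Hpc X a b.
rewrite add0r (reindex_onto wid nar); last first.
  move=> mo /andP [H1 H2]; apply/ffunP => v; rewrite !ffunE; apply: val_inj.
  rewrite /= inordK //; have := le_deg _ _ mo v; lia.
apply: eq_big => mo.
  rewrite deg_wid.
  have -> : nar (wid mo) = mo.
    by apply/ffunP => v; rewrite !ffunE inord_val.
  by rewrite eqxx andbT; case: (ltngtP (cmon_deg mo) l'.+1); lia.
by move=> _; rewrite ev_wid.
Qed.

Lemma dec_fsd : nc_decomp f L fsd.
Proof.
move=> n; split; [|split].
- by move=> j Hj; apply: vanish_hi.
- by move=> l E; apply: nonvan.
move=> X; have [D [c [HR [HS HN]]]] := rep_of n.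
apply/matrixP => a b; rewrite summxE.
case E: (L n) => [l|] /=.
  have HDl : l = D := esym (HS l E).
  subst l.
  by rewrite (expand _ X D _ _ HR (leqnn D)).
by have := Hdeg n; rewrite E /= => ->; rewrite big_ord0 mxE.
Qed.

Lemma uniq_dec (gs : forall j : nat, hncpoly N d j) :
  nc_decomp f L gs -> forall j (w : j.-tuple 'I_d), gs j w = fsd j w.
Proof.
move=> Hg.
have Heq : forall j n (X : tup K d n) a b,
    hnc_eval (gs j) X a b = hnc_eval (fsd j) X a b.
  move=> j n X a b; have [Hg1 [_ Hg3]] := Hg n; have [Hf1 [_ Hf3]] := dec_fsd n.
  case: (leqP (obound (L n)) j) => Hj.
    by rewrite (Hg1 j Hj X) (Hf1 j Hj X).
  have Hc : forall s : K, s != 0 ->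
      \sum_(i < obound (L n)) s ^+ i *: hnc_eval (gs i) X a b =
      \sum_(i < obound (L n)) s ^+ i *: hnc_eval (fsd i) X a b.
    move=> s _.
    have := congr1 (fun M : 'M[N]_n => M a b) (Hg3 (fun i => s *: X i)).
    rewrite (Hf3 (fun i => s *: X i)) !summxE => E.
    rewrite (eq_bigr (fun i : 'I_(obound (L n)) => hnc_eval (gs i) (fun k => s *: X k) a b)); last first.
      by move=> i _; rewrite hnc_scale.
    rewrite -E; apply: eq_bigr => i _; by rewrite hnc_scale.
  have := compare (fun i => hnc_eval (gs i) X a b) (fun i => hnc_eval (fsd i) X a b) _ _ Hc j.
  by rewrite /= Hj.
move=> j w.
have [k Hk] := wm_onto j w (eq_leq (size_tuple w)).
have Ev : forall p : hncpoly N d j, hnc_eval p (Lam j) k (e0 j) = p w.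
  move=> p; rewrite hnc_wev (bigD1 w) //= wev_Lam wm_e0 cats0 Hk eqxx scale1r.
  rewrite big1 ?addr0 // => t ne; rewrite wev_Lam wm_e0 cats0 Hk.
  by rewrite val_eqE eq_sym (negbTE ne) scale0r.
by rewrite -!Ev Heq.
Qed.

End P.


Theorem theorem6p4 (K : fieldType) (N : lmodType K) (d : nat)
    (f : ncfun N d) (L : nat -> option nat) :
  infinite_field K ->
  nc_function f ->
  (forall n : nat, poly_deg (f n) (L n)) ->
  exists fs : forall j : nat, hncpoly N d j,
    nc_decomp f L fs /\
    (forall gs : forall j : nat, hncpoly N d j,
        nc_decomp f L gs -> forall j (w : j.-tuple 'I_d), gs j w = fs j w).
Proof.
move=> Hinf Hnc Hdeg; exists (fsd K N d f); split.
  exact: (dec_fsd K N d f Hnc Hinf L Hdeg).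
exact: (uniq_dec K N d f Hnc Hinf L Hdeg).
Qed.
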